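(* Let $(M,g,J)$ be almost Hermitian of even complex dimension $m=2n$, $n\ge1$, with a complex spinor bundle $S^cM$ of a spin$^c$ structure. Set $$\alpha_1=\sqrt{\tfrac{m-1}{m+1}},\ \ \beta_1=m+1-(m+2)\alpha_1,\ \ \alpha_2=\sqrt{\tfrac{m+1}{m-1}},\ \ \beta_2=m+1-m\alpha_2,$$ $$\mathfrak{T}_X=\mathbf{i}\big(\alpha_1X^{1,0}\cdot\pi_{n-1}+\alpha_2X^{0,1}\cdot\pi_n+\beta_1X^{1,0}\cdot\pi_{n-2}+\beta_2X^{0,1}\cdot\pi_{n+1}\big),$$ $$\mathcal{T}=-\mathbf{i}(m+1)+\mathbf{i}\beta_1\pi_{n-1}+\mathbf{i}\beta_2\pi_n.$$ Then for every vector field $X$ the endomorphism $\mathfrak{T}_X+\gamma(X)\mathcal{T}$ of $S^cM$ is selfadjoint, and for any orthonormal frame $e_1,\dots,e_{2m}$, $$\mathcal{T}':=\sum_{j=1}^{2m}e_j\cdot\mathfrak{T}_{e_j}=\mathcal{T}\circ\mathrm{pr}_{\mathcal{V}}-\mathbf{i}\beta_1(m+4)\pi_{n-2}-\mathbf{i}\beta_2(m+2)\pi_{n+1}.$$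
   Context: $\Omega=g(\cdot,J\cdot)$; Clifford multiplication is $\gamma$ or $\cdot$; $S^cM=S_0\oplus\cdots\oplus S_m$ with $S_j$ the eigenbundle of $\gamma(\Omega)$ for eigenvalue $\mathbf{i}(m-2j)$ and orthogonal projections $\pi_j$ ($\pi_j=0$ if $j\notin\{0,\dots,m\}$). $X^{1,0}=\frac12(X-\mathbf{i}JX)$, $X^{0,1}=\frac12(X+\mathbf{i}JX)$. $\mathcal{V}=S_{n-1}\oplus S_n$ and $\mathrm{pr}_{\mathcal{V}}=\pi_{n-1}+\pi_n$. *)

(* Defs.v *)
(* Fiberwise (pointwise) model of the spinor bundle of an
   almost Hermitian manifold of real dimension 2m, m = 2n. *)
From HB Require Import structures.
From mathcomp Require Import all_boot all_order all_algebra.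
Set Implicit Arguments. Unset Strict Implicit. Unset Printing Implicit Defensive.
Import Order.TTheory GRing.Theory Num.Theory.
Local Open Scope ring_scope.

Section Spin.
Variables (C : numClosedFieldType) (d N : nat).

Definition adj (A : 'M[C]_N) : 'M[C]_N := (map_mx Num.conj A)^T.

Definition real_vec (x : 'rV[C]_d) : Prop := forall k, x 0 k \is Num.real.
Definition real_mx (A : 'M[C]_d) : Prop := forall i j, A i j \is Num.real.

(* Euclidean metric g on the tangent space (standard basis is orthonormal) *)
Definition gmet (x y : 'rV[C]_d) : C := (x *m y^T) 0 0.

Definition Jv (J : 'M[C]_d) (x : 'rV[C]_d) : 'rV[C]_d := x *m J.

(* almost Hermitian: J real, J^2 = -1, g(JX,JY) = g(X,Y) *)
Definition almost_hermitian (J : 'M[C]_d) : Prop :=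
  [/\ real_mx J, J *m J = - 1%:M & J *m J^T = 1%:M].

(* Clifford multiplication by the (complexified) vector z, C-linearly
   extended from the standard orthonormal basis e_k |-> gam k *)
Definition cliff (gam : 'I_d -> 'M[C]_N) (z : 'rV[C]_d) : 'M[C]_N :=
  \sum_(k < d) z 0 k *: gam k.

Definition clifford_module (gam : 'I_d -> 'M[C]_N) : Prop :=
  (forall k l, gam k *m gam l + gam l *m gam k = - ((k == l)%:R *+ 2) *: 1%:M)
  /\ (forall k, adj (gam k) = - gam k).

Definition evec (k : 'I_d) : 'rV[C]_d := delta_mx 0 k.

Definition Omega (J : 'M[C]_d) (x y : 'rV[C]_d) : C := gmet x (Jv J y).
Definition gOmega (J : 'M[C]_d) (gam : 'I_d -> 'M[C]_N) : 'M[C]_N :=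
  \sum_(i < d) \sum_(j < d | (i < j)%N) Omega J (evec i) (evec j) *: (gam i *m gam j).

Definition x10 (J : 'M[C]_d) (x : 'rV[C]_d) : 'rV[C]_d := 2^-1 *: (x - 'i *: Jv J x).
Definition x01 (J : 'M[C]_d) (x : 'rV[C]_d) : 'rV[C]_d := 2^-1 *: (x + 'i *: Jv J x).

Definition orth_proj_eigen (A : 'M[C]_N) (lam : C) (P : 'M[C]_N) : Prop :=
  [/\ P *m P = P, adj P = P &
      forall v : 'cV[C]_N, P *m v = v <-> A *m v = lam *: v].

End Spin.

(* pi j = orthogonal projection onto S_j (eigenvalue i(m-2j) of gamma(Omega)),
   and pi j = 0 for j outside {0,..,m}; indices are integers *)
Definition spinor_projections (C : numClosedFieldType) (d N m : nat)
  (J : 'M[C]_d) (gam : 'I_d -> 'M[C]_N) (pi : int -> 'M[C]_N) : Prop :=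
  forall j : int,
    if (0 <= j) && (j <= m%:Z) then
      orth_proj_eigen (gOmega J gam) ('i * ((m%:Z - 2 * j)%:~R)) (pi j)
    else pi j = 0.

Section Ops.
Variables (C : numClosedFieldType) (m N : nat).
Local Notation d := (2 * m)%N.
Variables (J : 'M[C]_d) (gam : 'I_d -> 'M[C]_N) (pi : int -> 'M[C]_N) (n : int).

Definition alpha1 : C := sqrtC ((m%:R - 1) / (m%:R + 1)).
Definition beta1 : C := m%:R + 1 - (m%:R + 2) * alpha1.
Definition alpha2 : C := sqrtC ((m%:R + 1) / (m%:R - 1)).
Definition beta2 : C := m%:R + 1 - m%:R * alpha2.

Definition frakT (x : 'rV[C]_d) : 'M[C]_N :=
  'i *: (alpha1 *: (cliff gam (x10 J x) *m pi (n - 1))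
       + alpha2 *: (cliff gam (x01 J x) *m pi n)
       + beta1 *: (cliff gam (x10 J x) *m pi (n - 2))
       + beta2 *: (cliff gam (x01 J x) *m pi (n + 1))).

Definition calT : 'M[C]_N :=
  - ('i * (m%:R + 1)) *: 1%:M + ('i * beta1) *: pi (n - 1) + ('i * beta2) *: pi n.

End Ops.

(* Main.v *)
Require Import Defs.
From HB Require Import structures.
From mathcomp Require Import all_boot all_order all_algebra.
From mathcomp Require Import ring zify.
Set Implicit Arguments. Unset Strict Implicit. Unset Printing Implicit Defensive.
Import Order.TTheory GRing.Theory Num.Theory.
Local Open Scope ring_scope.

Section Adj.
Variables (C : numClosedFieldType) (N : nat).
Implicit Types (A B : 'M[C]_N).

Lemma hadjE A i j : adj A i j = (A j i)^*.
Proof. by rewrite /adj !mxE. Qed.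

Lemma hadjD A B : adj (A + B) = adj A + adj B.
Proof. by apply/matrixP => i j; rewrite !(hadjE, mxE) rmorphD. Qed.

Lemma hadjN A : adj (- A) = - adj A.
Proof. by apply/matrixP => i j; rewrite !(hadjE, mxE) rmorphN. Qed.

Lemma hadjB A B : adj (A - B) = adj A - adj B.
Proof. by rewrite hadjD hadjN. Qed.

Lemma hadj0 : adj (0 : 'M[C]_N) = 0.
Proof. by apply/matrixP => i j; rewrite !(hadjE, mxE) rmorph0. Qed.

Lemma hadjZ c A : adj (c *: A) = c^* *: adj A.
Proof. by apply/matrixP => i j; rewrite !(hadjE, mxE) rmorphM. Qed.

Lemma hadjM A B : adj (A *m B) = adj B *m adj A.
Proof.
apply/matrixP => i j; rewrite hadjE !mxE rmorph_sum; apply: eq_bigr => k _.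
by rewrite !hadjE rmorphM mulrC.
Qed.

Lemma hadjK A : adj (adj A) = A.
Proof. by apply/matrixP => i j; rewrite !hadjE conjCK. Qed.

Lemma hadj1 : adj (1%:M : 'M[C]_N) = 1%:M.
Proof.
apply/matrixP => i j; rewrite hadjE !mxE (eq_sym j i).
by case: (i == j); rewrite /= ?rmorph1 ?rmorph0.
Qed.

Lemma hadj_sum (I : finType) (F : I -> 'M[C]_N) :
  adj (\sum_i F i) = \sum_i adj (F i).
Proof.
elim/big_rec2: _ => [|i y1 y2 _ <-]; by rewrite ?hadj0 ?hadjD.
Qed.

Lemma hadj_scal c : adj (c *: 1%:M : 'M[C]_N) = c^* *: 1%:M.
Proof. by rewrite hadjZ hadj1. Qed.

Lemma tr_adj_ge0 (W : 'M[C]_N) : 0 <= \tr (adj W *m W).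
Proof.
rewrite /mxtrace; apply: sumr_ge0 => j _; rewrite mxE.
apply: sumr_ge0 => k _; rewrite hadjE mulrC; exact: mul_conjC_ge0.
Qed.

Lemma tr_adj_eq0 (W : 'M[C]_N) : \tr (adj W *m W) = 0 -> W = 0.
Proof.
move=> /eqP; rewrite /mxtrace psumr_eq0 => [/allP H|j _]; last first.
  rewrite mxE; apply: sumr_ge0 => k _; rewrite hadjE mulrC; exact: mul_conjC_ge0.
apply/matrixP => k j; rewrite [RHS]mxE.
have := H j (mem_index_enum _); rewrite /= mxE psumr_eq0 => [/allP H2|i _]; last first.
  by rewrite hadjE mulrC; exact: mul_conjC_ge0.
have := H2 k (mem_index_enum _); rewrite /= hadjE mulrC mul_conjC_eq0.
by move/eqP.
Qed.

End Adj.


Section Cliff.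
Variables (C : numClosedFieldType) (d N : nat) (gam : 'I_d -> 'M[C]_N).
Local Notation cl := (cliff gam).

Lemma cliffD x y : cl (x + y) = cl x + cl y.
Proof. by rewrite /cliff -big_split; apply: eq_bigr => k _; rewrite mxE scalerDl. Qed.

Lemma cliffZ c x : cl (c *: x) = c *: cl x.
Proof. by rewrite /cliff scaler_sumr; apply: eq_bigr => k _; rewrite mxE scalerA. Qed.

Lemma cliffN x : cl (- x) = - cl x.
Proof. by rewrite -scaleN1r cliffZ scaleN1r. Qed.

Lemma cliffB x y : cl (x - y) = cl x - cl y.
Proof. by rewrite cliffD cliffN. Qed.

Lemma cliff0 : cl 0 = 0.
Proof. by rewrite -(scale0r 0) cliffZ scale0r. Qed.

Lemma cliff_sum (I : finType) (F : I -> 'rV[C]_d) : cl (\sum_i F i) = \sum_i cl (F i).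
Proof. by elim/big_rec2: _ => [|i y1 y2 _ <-]; rewrite ?cliff0 ?cliffD. Qed.

Lemma cliff_delta k : cl (delta_mx 0 k) = gam k.
Proof.
rewrite /cliff (bigD1 k) //= big1 ?addr0 => [|l /negbTE nlk].
  by rewrite mxE !eqxx scale1r.
by rewrite mxE nlk andbF scale0r.
Qed.

Lemma cliff_mul_row (y : 'rV[C]_d) (K : 'M[C]_d) :
  cl (y *m K) = \sum_k y 0 k *: cl (row k K).
Proof. by rewrite mulmx_sum_row cliff_sum; apply: eq_bigr => k _; rewrite cliffZ. Qed.

Lemma cliff_row1 k : cl (row k 1%:M) = gam k.
Proof. by rewrite rowE mulmx1 cliff_delta. Qed.

Lemma cliff_prod x y : cl x *m cl y = \sum_k \sum_l (x 0 k * y 0 l) *: (gam k *m gam l).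
Proof.
rewrite /cliff mulmx_suml; apply: eq_bigr => k _.
rewrite mulmx_sumr; apply: eq_bigr => l _.
by rewrite -scalemxAl -scalemxAr scalerA.
Qed.

Hypothesis hg : clifford_module gam.

Lemma cliff_anti x y :
  cl x *m cl y + cl y *m cl x = (- 2 * (x *m y^T) 0 0) *: 1%:M.
Proof.
case: hg => hg1 _.
rewrite !cliff_prod (exchange_big _ _ _ _ _ (fun k l => (y 0 k * x 0 l) *: _)) /=.
rewrite -big_split /= mxE mulr_sumr scaler_suml.
apply: eq_bigr => k _; rewrite -big_split /=.
rewrite (bigD1 k) //= big1 ?addr0 => [|l /negbTE nlk].
  rewrite [y 0 k * _]mulrC -scalerDr hg1 eqxx scalerA mxE; congr (_ *: _).
  by rewrite mulrC; congr (_ * _); rewrite /= mulr1n.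
by rewrite [y 0 l * _]mulrC -scalerDr hg1 eq_sym nlk mul0rn oppr0 scale0r scaler0.
Qed.

Lemma cliff_sq x : cl x *m cl x = - (x *m x^T) 0 0 *: 1%:M.
Proof.
have := cliff_anti x x; rewrite -mulr2n -scaler_nat.
move=> /(congr1 (fun M => 2^-1 *: M)); rewrite !scalerA mulVf ?pnatr_eq0 // scale1r => ->.
by rewrite mulrA mulrN mulVf ?pnatr_eq0 // mulN1r.
Qed.

Lemma adj_cliff x : adj (cl x) = - cl (map_mx Num.conj x).
Proof.
rewrite /cliff hadj_sum -sumrN; apply: eq_bigr => k _.
by rewrite hadjZ mxE (proj2 hg) scalerN.
Qed.

Lemma adj_gam k : adj (gam k) = - gam k.
Proof. exact: (proj2 hg). Qed.

Lemma gam_anti k l : gam k *m gam l + gam l *m gam k = - ((k == l)%:R *+ 2) *: 1%:M.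
Proof. exact: (proj1 hg). Qed.

End Cliff.


Section JSec.
Variables (C : numClosedFieldType) (d N : nat) (gam : 'I_d -> 'M[C]_N) (J : 'M[C]_d).
Hypothesis hg : clifford_module gam.
Hypothesis hJ : almost_hermitian J.
Local Notation cl := (cliff gam).

Lemma JT : J^T = - J.
Proof.
case: hJ => _ JJ JJt.
have -> : J^T = - (J *m J) *m J^T by rewrite JJ opprK mul1mx.
by rewrite mulNmx -mulmxA JJt mulmx1.
Qed.

Lemma JTe i j : J j i = - J i j.
Proof. by have := congr1 (fun M : 'M[C]_d => M i j) JT; rewrite !mxE. Qed.

Lemma Jdiag k : J k k = 0.
Proof.
have /eqP := JTe k k; rewrite -subr_eq0 opprK -mulr2n -mulr_natl mulf_eq0 pnatr_eq0 /=.
by move/eqP.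
Qed.

Lemma row_delta_T (y : 'rV[C]_d) k : (y *m (delta_mx 0 k : 'rV[C]_d)^T) 0 0 = y 0 k.
Proof. by rewrite trmx_delta -(colE k y) mxE. Qed.

Lemma Jreal i j : (J i j)^* = J i j.
Proof. by case: hJ => hr _ _; rewrite conj_Creal. Qed.

Lemma conj_rowJ k : map_mx Num.conj (row k J) = row k J.
Proof. by apply/matrixP => i j; rewrite !mxE Jreal. Qed.

Definition Kop := \sum_k gam k *m cl (row k J).

Lemma OmegaE i j : Omega J (evec C i) (evec C j) = - J i j.
Proof.
rewrite /Omega /gmet /Jv /evec trmx_mul mulmxA row_delta_T -rowE !mxE.
exact: JTe.
Qed.

Lemma gam_anti_ne i j : i != j -> gam j *m gam i = - (gam i *m gam j).
Proof.
move=> /negbTE nij; apply/eqP; rewrite -addr_eq0 addrC gam_anti //.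
by rewrite nij mul0rn oppr0 scale0r.
Qed.

Lemma KopE : Kop = \sum_i \sum_j J i j *: (gam i *m gam j).
Proof.
apply: eq_bigr => i _; rewrite /cliff mulmx_sumr; apply: eq_bigr => j _.
by rewrite mxE -scalemxAr.
Qed.

Lemma gOmegaE : gOmega J gam = - 2^-1 *: Kop.
Proof.
pose F i j := J i j *: (gam i *m gam j).
have hsplit : Kop = \sum_(i < d) \sum_(j < d) (if (i < j)%N then F i j else 0)
                  + \sum_(i < d) \sum_(j < d) (if (j < i)%N then F i j else 0).
  rewrite KopE -big_split; apply: eq_bigr => i _; rewrite -big_split.
  apply: eq_bigr => j _ /=.
  case: (ltngtP i j) => h; rewrite ?addr0 ?add0r //.
  by rewrite /F (val_inj h) Jdiag scale0r.
have hsym : \sum_(i < d) \sum_(j < d) (if (j < i)%N then F i j else 0)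
          = \sum_(i < d) \sum_(j < d) (if (i < j)%N then F i j else 0).
  rewrite exchange_big; apply: eq_bigr => i _; apply: eq_bigr => j _.
  case: ifP => // h; rewrite /F JTe gam_anti_ne ?scalerN ?scaleNr ?opprK //.
  by rewrite neq_ltn h.
rewrite hsplit hsym -mulr2n -scaler_nat scalerA mulNr mulVf ?pnatr_eq0 //.
rewrite scaleN1r /gOmega -sumrN; apply: eq_bigr => i _.
rewrite big_mkcond -sumrN; apply: eq_bigr => j _ /=.
by case: ifP => _; rewrite ?oppr0 // OmegaE scaleNr.
Qed.


Lemma cg_anti k : cl (row k J) *m gam k = - (gam k *m cl (row k J)).
Proof.
have := cliff_anti hg (row k J) (delta_mx 0 k).
rewrite cliff_delta row_delta_T mxE Jdiag mulr0 scale0r.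
by move/eqP; rewrite addr_eq0 => /eqP.
Qed.

Lemma adj_Kop : adj Kop = - Kop.
Proof.
rewrite /Kop hadj_sum -sumrN; apply: eq_bigr => k _.
by rewrite hadjM adj_gam // adj_cliff // conj_rowJ mulmxN mulNmx opprK cg_anti.
Qed.

Lemma adj_gOmega : adj (gOmega J gam) = - gOmega J gam.
Proof.
rewrite gOmegaE hadjZ adj_Kop scalerN rmorphN fmorphV /= rmorph_nat.
by rewrite scaleNr.
Qed.

Lemma commK y : Kop *m cl y - cl y *m Kop = 4%:R *: cl (y *m J).
Proof.
rewrite /Kop mulmx_suml mulmx_sumr -sumrB.
transitivity (\sum_k ((-2 * (row k J *m y^T) 0 0) *: gam k + (2 * y 0 k) *: cl (row k J))).
  apply: eq_bigr => k _.
  have e1 := cliff_anti hg (row k J) y.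
  have e2 := cliff_anti hg y (delta_mx 0 k).
  rewrite cliff_delta row_delta_T in e2.
  have e1' : cl (row k J) *m cl y = (-2 * (row k J *m y^T) 0 0) *: 1%:M - cl y *m cl (row k J).
    by rewrite -e1 addrK.
  have e2' : cl y *m gam k = (-2 * y 0 k) *: 1%:M - gam k *m cl y by rewrite -e2 addrK.
  rewrite -mulmxA e1' mulmxA e2' mulmxBr mulmxBl !mulmxA.
  rewrite -!scalemxAr -!scalemxAl mulmx1 mul1mx opprB addrA subrK.
  by congr (_ + _); rewrite -scaleNr mulNr opprK.
have eT : \sum_k (row k J *m y^T) 0 0 *: gam k = - cl (y *m J).
  rewrite -cliffN -mulmxN -JT /cliff; apply: eq_bigr => k _; congr (_ *: _).
  rewrite !mxE; apply: eq_bigr => l _; rewrite !mxE mulrC.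
  done.
rewrite big_split /=.
have -> : \sum_k (-2 * (row k J *m y^T) 0 0) *: gam k
        = (-2) *: \sum_k (row k J *m y^T) 0 0 *: gam k.
  by rewrite scaler_sumr; apply: eq_bigr => k _; rewrite scalerA.
have -> : \sum_k (2 * y 0 k) *: cl (row k J) = 2 *: \sum_k y 0 k *: cl (row k J).
  by rewrite scaler_sumr; apply: eq_bigr => k _; rewrite scalerA.
rewrite eT -cliff_mul_row scalerN -scaleNr opprK -scalerDl.
by rewrite -natrD.
Qed.

Lemma KopE2 : Kop = - 2%:R *: gOmega J gam.
Proof.
rewrite gOmegaE scalerA mulrNN divff ?pnatr_eq0 // scale1r //.
Qed.

Lemma commA y : gOmega J gam *m cl y - cl y *m gOmega J gam = - 2%:R *: cl (y *m J).
Proof.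
rewrite gOmegaE -scalemxAl -scalemxAr -scalerBr commK scalerA; congr (_ *: _).
rewrite mulNr; congr (- _).
by rewrite -[4%:R]/((2 * 2)%N%:R) natrM mulKf ?pnatr_eq0.
Qed.

Lemma gam_sq k : gam k *m gam k = - 1%:M.
Proof.
have := cliff_sq hg (delta_mx 0 k); rewrite cliff_delta row_delta_T mxE !eqxx /=.
by rewrite scaleNr scale1r.
Qed.

Lemma sumK c : \sum_k gam k *m cl (row k (2^-1 *: (1%:M + c *: J)))
  = 2^-1 *: (- (d%:R) *: 1%:M + c *: Kop).
Proof.
transitivity (\sum_k 2^-1 *: (- 1%:M + c *: (gam k *m cl (row k J)))).
  apply: eq_bigr => k _.
  rewrite rowE -scalemxAr mulmxDr mulmx1 -scalemxAr -rowE.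
  by rewrite cliffZ cliffD cliffZ cliff_delta -scalemxAr mulmxDr -scalemxAr gam_sq.
rewrite -scaler_sumr big_split /= sumr_const card_ord -scaler_sumr.
by rewrite scaleNr scaler_nat -mulNrn.
Qed.

Lemma frame_sum (P K : 'M[C]_d) : P^T *m P = 1%:M ->
  \sum_j cl (row j P) *m cl (row j P *m K) = \sum_k gam k *m cl (row k K).
Proof.
move=> hP.
have hPe k l : \sum_j P j k * P j l = (k == l)%:R.
  have := congr1 (fun M : 'M[C]_d => M k l) hP; rewrite !mxE => <-.
  by apply: eq_bigr => j _; rewrite mxE.
have e j : cl (row j P) *m cl (row j P *m K)
    = \sum_k \sum_l (P j k * P j l) *: (gam k *m cl (row l K)).
  rewrite cliff_mul_row {1}/cliff mulmx_suml; apply: eq_bigr => k _.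
  rewrite mulmx_sumr; apply: eq_bigr => l _.
  by rewrite !mxE -scalemxAl -scalemxAr scalerA.
under eq_bigr do rewrite e.
rewrite exchange_big; apply: eq_bigr => k _ /=.
rewrite exchange_big /= (bigD1 k) //= [X in _ + X]big1 ?addr0.
  by rewrite -scaler_suml hPe eqxx scale1r.
move=> l nlk; rewrite -scaler_suml hPe eq_sym (negbTE nlk) scale0r //.
Qed.

End JSec.



Section OPE.
Variables (C : numClosedFieldType) (N : nat).

Lemma ope_eig (A : 'M[C]_N) lam P : orth_proj_eigen A lam P -> A *m P = lam *: P.
Proof.
case=> PP _ hv; apply/matrixP => r s.
have h : P *m col s P = col s P by rewrite !colE mulmxA PP.
have := congr1 (fun v : 'cV[C]_N => v r 0) ((hv (col s P)).1 h).
by rewrite !colE mulmxA -!colE !mxE.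
Qed.

Lemma ope_fix (A : 'M[C]_N) lam P (W : 'M[C]_N) : orth_proj_eigen A lam P -> A *m W = lam *: W -> P *m W = W.
Proof.
case=> _ _ hv hW; apply/matrixP => r s.
have h : A *m col s W = lam *: col s W by rewrite !colE mulmxA hW scalemxAl.
have := congr1 (fun v : 'cV[C]_N => v r 0) ((hv (col s W)).2 h).
by rewrite !colE mulmxA -!colE !mxE.
Qed.

End OPE.

Section Eig.
Variables (C : numClosedFieldType) (m d N : nat) (gam : 'I_d -> 'M[C]_N) (J : 'M[C]_d)
  (pi : int -> 'M[C]_N).
Hypothesis hg : clifford_module gam.
Hypothesis hJ : almost_hermitian J.
Hypothesis hd : d = (2 * m)%N.
Hypothesis hpi : spinor_projections m J gam pi.
Local Notation cl := (cliff gam).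
Local Notation A := (gOmega J gam).

Definition lam (j : int) : C := 'i * ((m%:Z - 2 * j)%:~R).

Lemma lam_succ j : lam (j + 1) = lam j - 2%:R * 'i.
Proof. rewrite /lam; ring. Qed.

Lemma lam_conj j : (lam j)^* = - lam j.
Proof. by rewrite /lam rmorphM /= conjCi rmorph_int mulNr. Qed.

Lemma pi_props j : A *m pi j = lam j *: pi j /\ adj (pi j) = pi j /\ pi j *m pi j = pi j.
Proof.
move: (hpi j); case: ifP => _ h.
  split; first exact: ope_eig h.
  by case: h => PP aP _.
by rewrite h mulmx0 scaler0 hadj0 mulmx0.
Qed.

Lemma pi_left j : pi j *m A = lam j *: pi j.
Proof.
have [h1 [h2 _]] := pi_props j.
have := congr1 (@adj _ _) h1; rewrite hadjM hadjZ h2 adj_gOmega // lam_conj mulmxN scaleNr.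
by move/eqP; rewrite eqr_opp => /eqP.
Qed.

Lemma pi_orth i j : i != j -> pi i *m pi j = 0.
Proof.
move=> nij.
have e : lam i *: (pi i *m pi j) = lam j *: (pi i *m pi j).
  by rewrite scalemxAl -pi_left -mulmxA (pi_props j).1 -scalemxAr.
move/eqP: e; rewrite -subr_eq0 -scalerBl scaler_eq0 subr_eq0 => /orP [|/eqP //].
rewrite /lam => /eqP /(mulfI (neq0Ci C)) /intr_inj => h.
have hij : i = j by lia.
by rewrite hij eqxx in nij.
Qed.

Lemma pi_fix j (W : 'M[C]_N) : (0 <= j) -> (j <= m%:Z) -> A *m W = lam j *: W -> pi j *m W = W.
Proof. move=> h0 h1; have := hpi j; rewrite h0 h1 /= => h; exact: ope_fix h. Qed.


Lemma rowJ_norm k : (row k J *m (row k J)^T) 0 0 = 1.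
Proof.
case: hJ => _ _ JJt.
have := congr1 (fun M : 'M[C]_d => M k k) JJt; rewrite !mxE eqxx mulr1n => <-.
by apply: eq_bigr => l _; rewrite !mxE.
Qed.

Definition U k := 'i *: (gam k *m cl (row k J)).

Lemma adjU k : adj (U k) = U k.
Proof.
rewrite /U hadjZ conjCi hadjM adj_gam // adj_cliff // conj_rowJ // mulmxN mulNmx opprK.
by rewrite cg_anti // scaleNr scalerN opprK.
Qed.

Lemma UU k : U k *m U k = 1%:M.
Proof.
rewrite /U -scalemxAl -scalemxAr scalerA mulCii.
have -> : gam k *m cl (row k J) *m (gam k *m cl (row k J))
        = (-1) *: (gam k *m gam k *m (cl (row k J) *m cl (row k J))).
  by rewrite scaleN1r -!mulmxA (mulmxA (cl (row k J))) cg_anti // mulNmx mulmxN -!mulmxA.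
rewrite scalerA mulrNN mulr1 scale1r gam_sq // cliff_sq // rowJ_norm mulNmx mul1mx.
by rewrite scaleNr scale1r opprK.
Qed.

Lemma sumU : \sum_k U k = ('i * - 2%:R) *: A.
Proof. by rewrite -scaler_sumr -/(Kop gam J) KopE2 // scalerA. Qed.

Lemma bound (W : 'M[C]_N) : A *m W = lam (-1) *: W -> W = 0.
Proof.
move=> hW.
have hk k : 0 <= \tr (adj W *m ((1%:M - U k) *m W)).
  have e : 1%:M - U k = 2^-1 *: (adj (1%:M - U k) *m (1%:M - U k)).
    rewrite hadjB hadj1 adjU mulmxBl mul1mx mulmxBr mulmx1 UU.
    by rewrite opprB -mulr2n -scaler_nat scalerA mulVf ?pnatr_eq0 // scale1r.
  rewrite e -scalemxAl -scalemxAr mxtraceZ -[adj (1%:M - U k) *m _ *m W]mulmxA [adj W *m _]mulmxA -hadjM.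
  by apply: mulr_ge0; [rewrite invr_ge0 ler0n | exact: tr_adj_ge0].
have hs : \sum_k \tr (adj W *m ((1%:M - U k) *m W)) = - 4%:R * \tr (adj W *m W).
  rewrite -raddf_sum -mulmx_sumr -mulmx_suml sumrB sumr_const card_ord sumU.
  rewrite mulmxBl -scalemxAl hW scalerA -scaler_nat -scalemxAl mul1mx -scalerBl.
  rewrite -scalemxAr /= mxtraceZ; congr (_ * _).
  have -> : forall z : C, d%:R - 'i * - 2%:R * ('i * z) = d%:R + 2%:R * ('i * 'i) * z.
    by move=> z; ring.
  by rewrite mulCii hd; ring.
have t0 := tr_adj_ge0 W.
have : 0 <= - 4%:R * \tr (adj W *m W).
  by rewrite -hs; apply: sumr_ge0 => k _; exact: hk k.
rewrite mulNr oppr_ge0 pmulr_rle0 ?ltr0n // => tle.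
by apply: tr_adj_eq0; apply/eqP; rewrite eq_le tle t0.
Qed.

End Eig.



Section Shift.
Variables (C : numClosedFieldType) (m d N : nat) (gam : 'I_d -> 'M[C]_N) (J : 'M[C]_d)
  (pi : int -> 'M[C]_N).
Hypothesis hg : clifford_module gam.
Hypothesis hJ : almost_hermitian J.
Hypothesis hd : d = (2 * m)%N.
Hypothesis hpi : spinor_projections m J gam pi.
Local Notation cl := (cliff gam).
Local Notation A := (gOmega J gam).

Lemma x10J (x : 'rV[C]_d) : x10 J x *m J = 'i *: x10 J x.
Proof.
case: hJ => _ JJ _.
rewrite /x10 /Jv -scalemxAl mulmxBl -scalemxAl -mulmxA JJ mulmxN mulmx1.
rewrite scalerA mulrC -scalerA; congr (_ *: _).
by rewrite scalerN opprK scalerBr scalerA mulCii scaleN1r opprK addrC.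
Qed.

Lemma x01J (x : 'rV[C]_d) : x01 J x *m J = - 'i *: x01 J x.
Proof.
case: hJ => _ JJ _.
rewrite /x01 /Jv -scalemxAl mulmxDl -scalemxAl -mulmxA JJ mulmxN mulmx1.
rewrite scalerA mulrC -scalerA; congr (_ *: _).
by rewrite scalerDr scalerA mulNr mulCii opprK scale1r scaleNr scalerN addrC.
Qed.

Lemma x10_x01 (x : 'rV[C]_d) : x10 J x + x01 J x = x.
Proof.
rewrite /x10 /x01 -scalerDr addrACA addNr addr0 -mulr2n -scaler_nat scalerA.
by rewrite mulVf ?pnatr_eq0 // scale1r.
Qed.

Lemma conj_x10 (x : 'rV[C]_d) : real_vec x -> map_mx Num.conj (x10 J x) = x01 J x.
Proof.
move=> hx; case: hJ => hr _ _.
apply/matrixP => i j; rewrite !mxE.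
have hxr l : (x i l)^* = x i l by rewrite (ord1 i) conj_Creal ?hx.
have hs : (\sum_l x i l * J l j)^* = \sum_l x i l * J l j.
  by rewrite rmorph_sum; apply: eq_bigr => l _; rewrite rmorphM /= hxr conj_Creal.
rewrite rmorphM rmorphB rmorphM /= conjCi fmorphV /= rmorph_nat hxr hs.
ring.
Qed.

Variable x : 'rV[C]_d.
Hypothesis hx : real_vec x.
Local Notation a := (cl (x10 J x)).
Local Notation b := (cl (x01 J x)).

Lemma adj_a : adj a = - b.
Proof. by rewrite adj_cliff // conj_x10. Qed.

Lemma adj_b : adj b = - a.
Proof. by rewrite -[b]opprK hadjN -adj_a hadjK. Qed.

Lemma comm_a : A *m a = a *m A - (2%:R * 'i) *: a.
Proof.
have := commA hg hJ (x10 J x); rewrite x10J cliffZ scalerA => /eqP.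
by rewrite subr_eq => /eqP ->; rewrite addrC mulNr scaleNr.
Qed.

Lemma comm_b : A *m b = b *m A + (2%:R * 'i) *: b.
Proof.
have := commA hg hJ (x01 J x); rewrite x01J (cliffZ _ (- 'i)) scalerA => /eqP.
by rewrite subr_eq => /eqP ->; rewrite addrC mulrN mulNr opprK.
Qed.

Lemma Ab k : A *m (b *m pi (k + 1)) = lam C m k *: (b *m pi (k + 1)).
Proof.
rewrite mulmxA comm_b mulmxDl -mulmxA (pi_props hpi _).1 -scalemxAr -scalemxAl.
by rewrite -scalerDl lam_succ subrK.
Qed.

Lemma Aa k : A *m (a *m pi k) = lam C m (k + 1) *: (a *m pi k).
Proof.
rewrite mulmxA comm_a mulmxBl -mulmxA (pi_props hpi _).1 -scalemxAr -scalemxAl.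
by rewrite -scalerBl lam_succ.
Qed.

Lemma pi_out j : (j < 0) || (m%:Z < j) -> pi j = 0.
Proof.
move=> h; have := hpi j; case: ifP => // /andP [h0 h1].
by move: h; rewrite ltNge h0 /= ltNge h1.
Qed.

Lemma shift_a j : 0 <= j + 1 -> j + 1 <= m%:Z -> pi (j + 1) *m a = a *m pi j.
Proof.
move=> h0 h1.
case: (ltrP j 0) => hj.
  have ej : j = -1 by lia.
  rewrite ej (@pi_out (-1)) // mulmx0 addNr.
  have hb0 : b *m pi 0 = 0.
    apply: (bound hg hJ hd); have := Ab (-1); by rewrite addNr.
  have := congr1 (@adj _ _) hb0; rewrite hadjM adj_b hadj0 (pi_props hpi 0).2.1.
  by rewrite mulmxN => /eqP; rewrite oppr_eq0 => /eqP.
have e1 : pi (j + 1) *m (a *m pi j) = a *m pi j.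
  by apply: (pi_fix hpi) => //; exact: Aa.
have e2 : pi j *m (b *m pi (j + 1)) = b *m pi (j + 1).
  by apply: (pi_fix hpi) => //; [lia | exact: Ab].
have := congr1 (@adj _ _) e2.
rewrite !hadjM adj_b !(pi_props hpi _).2.1 mulmxN mulNmx.
by move/eqP; rewrite eqr_opp => /eqP <-; rewrite -mulmxA e1.
Qed.

Lemma shift_b j : 0 <= j + 1 -> j + 1 <= m%:Z -> pi j *m b = b *m pi (j + 1).
Proof.
move=> h0 h1; have := congr1 (@adj _ _) (shift_a h0 h1).
rewrite !hadjM adj_a !(pi_props hpi _).2.1 mulmxN mulNmx.
by move/eqP; rewrite eqr_opp => /eqP.
Qed.

End Shift.


Lemma part1_alg (C : numClosedFieldType) (N : nat) (a b p0 p1 p2 p3 : 'M[C]_N)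
  (al1 al2 be1 be2 M : C) :
  al1^* = al1 -> al2^* = al2 -> be1^* = be1 -> be2^* = be2 -> M^* = M ->
  al1 + be1 = al2 + be2 ->
  adj a = - b -> adj b = - a -> adj p0 = p0 -> adj p1 = p1 -> adj p2 = p2 -> adj p3 = p3 ->
  p1 *m b = b *m p2 -> p0 *m b = b *m p1 -> p2 *m a = a *m p1 -> p3 *m a = a *m p2 ->
  p1 *m a = a *m p0 -> p2 *m b = b *m p3 ->
  adj ('i *: (al1 *: (a *m p1) + al2 *: (b *m p2) + be1 *: (a *m p0) + be2 *: (b *m p3))
       + (a + b) *m (- ('i * (M + 1)) *: 1%:M + ('i * be1) *: p1 + ('i * be2) *: p2))
  = 'i *: (al1 *: (a *m p1) + al2 *: (b *m p2) + be1 *: (a *m p0) + be2 *: (b *m p3))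
       + (a + b) *m (- ('i * (M + 1)) *: 1%:M + ('i * be1) *: p1 + ('i * be2) *: p2).
Proof.
move=> ca1 ca2 cb1 cb2 cM hab aa ab a0 a1 a2 a3 s1 s2 s3 s4 s5 s6.
rewrite !(hadjD, hadjZ, hadjM, hadj1) aa ab a0 a1 a2 a3.
rewrite !(rmorphN, rmorphM, rmorphD, rmorph1) /= conjCi ca1 ca2 cb1 cb2 cM.
rewrite !(mulmxN, mulNmx) s1 s2 s4 s3.
rewrite !(mulmxDl, mulmxDr, mulmxN, mulNmx, mul1mx, mulmx1, =^~ scalemxAl, =^~ scalemxAr).
rewrite s1 s3 s5 s6.
move: (a *m p0) (a *m p1) (a *m p2) (b *m p1) (b *m p2) (b *m p3) => A0 A1 A2 B1 B2 B3.
have -> : al2 = al1 + be1 - be2 by rewrite hab addrK.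
apply/matrixP => r s; rewrite !mxE.
ring.
Qed.


Lemma alpha_facts (C : numClosedFieldType) (n : nat) : (1 <= n)%N ->
  let M := (2 * n)%N in
  [/\ (alpha1 C M)^* = alpha1 C M, (alpha2 C M)^* = alpha2 C M,
      (beta1 C M)^* = beta1 C M, (beta2 C M)^* = beta2 C M &
      alpha1 C M + beta1 C M = alpha2 C M + beta2 C M].
Proof.
move=> hn M.
have hM1 : 1 <= M%:R :> C by rewrite ler1n /M; lia.
have hp : 0 < M%:R + 1 :> C by rewrite ltr_pwDr // ltr01 ?ler0n.
have hq : 0 < M%:R - 1 :> C.
  by rewrite subr_gt0 ltr1n /M; lia.
have r1 : 0 <= alpha1 C M by rewrite sqrtC_ge0 divr_ge0 // ?ltW // subr_ge0.
have r2 : 0 <= alpha2 C M by rewrite sqrtC_ge0 divr_ge0 // ltW.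
have c1 : (alpha1 C M)^* = alpha1 C M by rewrite conj_Creal // ger0_real.
have c2 : (alpha2 C M)^* = alpha2 C M by rewrite conj_Creal // ger0_real.
have cM : (M%:R : C)^* = M%:R by rewrite rmorph_nat.
have key : (M%:R + 1) * alpha1 C M = (M%:R - 1) * alpha2 C M.
  apply/eqP; rewrite -(@eqrXn2 _ 2) //; last by rewrite mulr_ge0 // ltW.
    rewrite !exprMn !sqrtCK; apply/eqP; field.
    by apply/andP; split; rewrite lt0r_neq0.
  by rewrite mulr_ge0 // ltW.
split => //.
- rewrite conj_Creal // /beta1.
  by rewrite rpredB ?rpredD ?rpredM ?realn ?real1 ?ger0_real ?addr_ge0 ?ler0n.
- rewrite conj_Creal // /beta2.
  by rewrite rpredB ?rpredD ?rpredM ?realn ?real1 ?ger0_real.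
apply/eqP; rewrite -subr_eq0 /beta1 /beta2.
have -> : alpha1 C M + (M%:R + 1 - (M%:R + 2) * alpha1 C M) -
  (alpha2 C M + (M%:R + 1 - M%:R * alpha2 C M))
  = (M%:R - 1) * alpha2 C M - (M%:R + 1) * alpha1 C M by ring.
by rewrite key subrr.
Qed.

Unset Implicit Arguments.

Theorem mainTheorem5 (C : numClosedFieldType) (n N : nat)
  (J : 'M[C]_(2 * (2 * n))) (gam : 'I_(2 * (2 * n)) -> 'M[C]_N)
  (pi : int -> 'M[C]_N) :
  (1 <= n)%N ->
  almost_hermitian J ->
  clifford_module gam ->
  N = (2 ^ (2 * n))%N ->
  spinor_projections (2 * n) J gam pi ->
  (forall x : 'rV[C]_(2 * (2 * n)), real_vec x ->
     adj (frakT J gam pi n%:Z x + cliff gam x *m calT (2 * n) pi n%:Z)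
     = frakT J gam pi n%:Z x + cliff gam x *m calT (2 * n) pi n%:Z)
  /\
  (forall P : 'M[C]_(2 * (2 * n)), real_mx P -> P *m P^T = 1%:M ->
     \sum_(j < 2 * (2 * n)) cliff gam (row j P) *m frakT J gam pi n%:Z (row j P)
     = calT (2 * n) pi n%:Z *m (pi (n%:Z - 1) + pi n%:Z)
       - ('i * beta1 C (2 * n) * ((2 * n)%:R + 4)) *: pi (n%:Z - 2)
       - ('i * beta2 C (2 * n) * ((2 * n)%:R + 2)) *: pi (n%:Z + 1)).
Proof.
move=> hn hJ hg hN hpi.
have hd : (2 * (2 * n))%N = (2 * (2 * n))%N by [].
have [ca1 ca2 cb1 cb2 hab] := alpha_facts C hn.
split.
- move=> x hx.
  have hcx : cliff gam x = cliff gam (x10 J x) + cliff gam (x01 J x).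
    by rewrite -cliffD x10_x01.
  rewrite /frakT /calT hcx.
  have h_sb := shift_b hg hJ hd hpi hx.
  have h_sa := shift_a hg hJ hd hpi hx.
  have s1 := h_sb (n%:Z - 1); rewrite subrK in s1.
  have s2 := h_sb (n%:Z - 2).
  have e21 : n%:Z - 2 + 1 = n%:Z - 1 by lia.
  rewrite e21 in s2.
  have s3 := h_sa (n%:Z - 1); rewrite subrK in s3.
  have s4 := h_sa n%:Z.
  have s5 := h_sa (n%:Z - 2); rewrite e21 in s5.
  have s6 := h_sb n%:Z.
  apply: (part1_alg ca1 ca2 cb1 cb2 _ hab (adj_a hg hJ hx) (adj_b hg hJ hx)
    (pi_props hpi _).2.1 (pi_props hpi _).2.1 (pi_props hpi _).2.1 (pi_props hpi _).2.1).
  + by rewrite rmorph_nat.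
  + by apply: s1; lia.
  + by apply: s2; lia.
  + by apply: s3; lia.
  + by apply: s4; lia.
  + by apply: s5; lia.
  + by apply: s6; lia.
move=> P _ hP.
have hPT := mulmx1C hP.
have K10 y : x10 J y = y *m (2^-1 *: (1%:M + (- 'i) *: J)).
  by rewrite /x10 /Jv -scalemxAr mulmxDr mulmx1 -scalemxAr scaleNr.
have K01 y : x01 J y = y *m (2^-1 *: (1%:M + 'i *: J)).
  by rewrite /x01 /Jv -scalemxAr mulmxDr mulmx1 -scalemxAr.
have S10 : \sum_j cliff gam (row j P) *m cliff gam (x10 J (row j P))
    = - ((2 * n)%N%:R) *: 1%:M + 'i *: gOmega J gam.
  under eq_bigr do rewrite K10.
  rewrite frame_sum // sumK // KopE2 // scalerDr !scalerA.
  congr (_ *: _ + _ *: _).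
    by rewrite natrM; field.
  by field.
have S01 : \sum_j cliff gam (row j P) *m cliff gam (x01 J (row j P))
    = - ((2 * n)%N%:R) *: 1%:M - 'i *: gOmega J gam.
  under eq_bigr do rewrite K01.
  rewrite frame_sum // sumK // KopE2 // scalerDr !scalerA -scaleNr.
  congr (_ *: _ + _ *: _).
    by rewrite natrM; field.
  by field.
have L j : (- ((2 * n)%N%:R) *: 1%:M + 'i *: gOmega J gam) *m pi j
    = (- ((2 * n)%N%:R) - (((2 * n)%N%:Z - 2 * j)%:~R)) *: pi j.
  rewrite mulmxDl -!scalemxAl mul1mx (pi_props hpi j).1 scalerA /lam mulrA mulCii mulN1r.
  by rewrite -scalerDl.
have L' j : (- ((2 * n)%N%:R) *: 1%:M - 'i *: gOmega J gam) *m pi j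
    = (- ((2 * n)%N%:R) + (((2 * n)%N%:Z - 2 * j)%:~R)) *: pi j.
  rewrite mulmxDl mulNmx -!scalemxAl mul1mx (pi_props hpi j).1 scalerA /lam mulrA mulCii mulN1r.
  by apply/matrixP => r s; rewrite !mxE; ring.
rewrite /frakT.
under eq_bigr do rewrite -scalemxAr !mulmxDr -!scalemxAr !mulmxA.
rewrite -scaler_sumr !big_split /= -!scaler_sumr -!mulmx_suml S10 S01 !L !L'.
have ne1 : n%:Z - 1 != n%:Z by apply/eqP; lia.
have ne2 : n%:Z != n%:Z - 1 by apply/eqP; lia.
rewrite /calT !mulmxDl !mulmxDr -!scalemxAl !mul1mx !(pi_props hpi _).2.2.
rewrite (pi_orth hg hJ hd hpi ne1) (pi_orth hg hJ hd hpi ne2) !scaler0 !addr0.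
move: (pi (n%:Z - 2)) (pi (n%:Z - 1)) (pi n%:Z) (pi (n%:Z + 1)) => q0 q1 q2 q3.
apply/matrixP => r s; rewrite !mxE /beta1 /beta2.
ring.
Qed.
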